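(* Let $\Gamma$ be a semi-nice permutation group of a countable set $\mathbb{V}$ and let $X$ be a $(\mathbb{V},\Gamma)$-process with $H(X_v)<\infty$. Then for every co-Følner sequence $(V_n)_{n\ge1}$ in $\mathbb{V}$, \[ h(X)=\lim_{n\to\infty}\frac{H(X_{V_n})}{|V_n|}. \]
   Context: $\Gamma$ acts by $g(x)_v=x_{g^{-1}(v)}$; a $(\mathbb{V},\Gamma)$-process is a random element of $\mathcal{A}^\mathbb{V}$ with $\Gamma$-invariant law. Semi-nice: transitive action and $|\Gamma_v w|<\infty$ for all $v,w$ ($\Gamma_v$ the stabilizer). $h(X)=\inf\{H(X_V)/|V|:V\subset\mathbb{V}\text{ finite nonempty}\}$, $H$ Shannon entropy. For $V\subset\mathbb{V}$ and $v_0,v_1\in\mathbb{V}$ let $\partial^{v_0}_{v_1}V=\{g\in\Gamma: g(v_0)\in V,\ g(v_1)\notin V\}v_0$. A sequence $(V_n)$ of finite subsets of $\mathbb{V}$ is co-Følner if $|\partial^{v_0}_{v_1}V_n|/|V_n|\to0$ and $|\partial^{v_0}_{v_1}(\mathbb{V}\setminus V_n)|/|V_n|\to0$ for all $v_0,v_1\in\mathbb{V}$. *)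

(* Defs.v *)
From HB Require Import structures.
From mathcomp Require Import all_boot all_order all_algebra finmap.
From mathcomp Require Import all_classical all_reals all_analysis.
Set Implicit Arguments. Unset Strict Implicit. Unset Printing Implicit Defensive.
Import Order.TTheory GRing.Theory Num.Theory numFieldNormedType.Exports.
Local Open Scope classical_set_scope.
Local Open Scope ring_scope.
Local Open Scope fset_scope.

Section Defs.
Variable V : countType.

Definition perm_group (G : set (V -> V)) : Prop :=
  [/\ (forall g, G g -> bijective g),
      G id,
      (forall g h, G g -> G h -> G (g \o h)) &
      (forall g, G g -> exists2 h, G h & cancel g h /\ cancel h g)].

Definition semi_nice (G : set (V -> V)) : Prop :=
  (forall v w : V, exists2 g, G g & g v = w) /\
  (forall v w : V, finite_set [set g w | g in [set g | G g /\ g v = v]]).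

Definition bdry (G : set (V -> V)) (v0 v1 : V) (W : set V) : set V :=
  [set g v0 | g in [set g | G g /\ W (g v0) /\ ~ W (g v1)]].

(* co-Folner sequence (the sets V_n are finite and nonempty so that the
   ratios make sense; an infinite boundary makes the ratio infinite, hence
   we require the boundaries to be eventually finite) *)
Definition coFolner (R : realType) (G : set (V -> V)) (Vn : nat -> {fset V}) : Prop :=
  (forall n, Vn n != fset0) /\
  forall v0 v1 : V,
    (\forall n \near \oo, finite_set (bdry G v0 v1 [set` Vn n])) /\
    (\forall n \near \oo, finite_set (bdry G v0 v1 (~` [set` Vn n]))) /\
    ((fun n => (#|` fset_set (bdry G v0 v1 [set` Vn n])|%:R / #|` Vn n|%:R : R))
       @ \oo --> (0 : R)) /\
    ((fun n => (#|` fset_set (bdry G v0 v1 (~` [set` Vn n]))|%:R / #|` Vn n|%:R : R))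
       @ \oo --> (0 : R)).

Variable A : countType.
Variables (d : measure_display) (Omega : measurableType d) (R : realType).

Definition random_field (X : V -> Omega -> A) : Prop :=
  forall v a, measurable (X v @^-1` [set a]).

(* the law of X is G-invariant: g(X)_v = X_{g^{-1} v} has the same law as X
   (equality on all cylinder sets, which generate the product sigma-algebra) *)
Definition invariant_law (G : set (V -> V)) (P : probability Omega R)
    (X : V -> Omega -> A) : Prop :=
  forall g ginv, G g -> cancel g ginv -> cancel ginv g ->
  forall (W : {fset V}) (f : V -> A),
    P [set w | forall v, v \in W -> X (ginv v) w = f v] =
    P [set w | forall v, v \in W -> X v w = f v].

Definition process (G : set (V -> V)) (P : probability Omega R)
    (X : V -> Omega -> A) : Prop :=
  random_field X /\ invariant_law G P X.

Definition cyl (X : V -> Omega -> A) (W : {fset V}) (x : {ffun W -> A}) : set Omega :=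
  [set w | forall i : W, X (val i) w = x i].

(* Shannon entropy (natural log, 0 log 0 = 0) of X_W, in [0, +oo] *)
Definition Hent (P : probability Omega R) (X : V -> Omega -> A) (W : {fset V})
  : \bar R :=
  \esum_(x in [set: {ffun W -> A}])
     (- (fine (P (cyl X x)) * ln (fine (P (cyl X x)))))%:E.

Definition hrate (P : probability Omega R) (X : V -> Omega -> A) : \bar R :=
  ereal_inf [set (Hent P X W * ((#|` W|%:R)^-1)%:E)%E | W in [set W : {fset V} | W != fset0]].

End Defs.

(* Main.v *)
Require Import Defs.
From HB Require Import structures.
From mathcomp Require Import all_boot all_order all_algebra finmap.
From mathcomp Require Import all_classical all_reals all_analysis.
From mathcomp Require Import ring lra.
Import Order.TTheory GRing.Theory Num.Theory numFieldNormedType.Exports.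
Local Open Scope classical_set_scope.
Local Open Scope ring_scope.
Local Open Scope fset_scope.
Section EsumAux.
Set Implicit Arguments. Unset Strict Implicit.
Context {R : realType}.
Local Open Scope ereal_scope.

Lemma esumZ_le (T : choiceType) (I : set T) (a : T -> \bar R) (k : R) :
  (0 <= k)%R -> (forall i, I i -> 0 <= a i) ->
  \esum_(i in I) (k%:E * a i) <= k%:E * \esum_(i in I) a i.
Proof.
move=> k0 a0; apply: ge_ereal_sup => _ [X [finX XI]] <-.
rewrite fsbig_finite//= big_seq -ge0_sume_distrr; last first.
  by move=> i; rewrite in_fset_set// inE => /XI/a0.
apply: lee_wpmul2l; first by rewrite lee_fin.
apply: ereal_sup_ubound; exists X => //.
by rewrite fsbig_finite// big_seq.
Qed.

Lemma esumZ (T : choiceType) (I : set T) (a : T -> \bar R) (k : R) :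
  (0 <= k)%R -> (forall i, I i -> 0 <= a i) ->
  \esum_(i in I) (k%:E * a i) = k%:E * \esum_(i in I) a i.
Proof.
move=> k0 a0; apply/eqP; rewrite eq_le esumZ_le//=.
have [->|kn0] := eqVneq k 0%R.
  by rewrite mul0e esum_ge0// => i Ii; rewrite mul0e.
have kp : (0 < k)%R by rewrite lt_neqAle eq_sym kn0.
rewrite -lee_pdivlMl//.
rewrite [X in X <= _](_ : _ = \esum_(i in I) (k^-1%:E * (k%:E * a i))); last first.
  by apply: eq_esum => i _; rewrite muleA -EFinM mulVf// mul1e.
apply: esumZ_le; first by rewrite invr_ge0.
by move=> i Ii; rewrite mule_ge0// a0.
Qed.

Lemma esum_subset (T : choiceType) (I J : set T) (a : T -> \bar R) :
  (I `<=` J)%classic -> (forall i, J i -> 0 <= a i) ->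
  \esum_(i in I) a i <= \esum_(i in J) a i.
Proof.
move=> IJ a0; rewrite esum_mkcond [X in _ <= X]esum_mkcond; apply: le_esum => i _.
case: ifPn => [/set_mem/IJ Ji|_]; first by rewrite ifT// inE.
by case: ifPn => // /set_mem; exact: a0.
Qed.

Lemma esum_fiber (T T' : choiceType) (f : T -> T') (a : T -> \bar R) :
  (forall t, 0 <= a t) ->
  \esum_(s in [set: T']) \esum_(t in f @^-1` [set s]) a t = \esum_(t in [set: T]) a t.
Proof.
move=> a0; rewrite esum_esum//.
rewrite (reindex_esum [set: T] _ (fun t => (f t, t))) //.
split.
- by move=> t _ /=.
- by move=> x y _ _ [].
- by move=> [s t] [_ /= <-]; exists t.
Qed.

End EsumAux.
Section Entropy.
Set Implicit Arguments. Unset Strict Implicit.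
Context {d : measure_display} {Omega : measurableType d} {R : realType}
  (P : probability Omega R).
Local Open Scope ereal_scope.

Definition Lg (x : R) : R := (- ln x)%R.
Definition phi (x : R) : R := (x * Lg x)%R.
Definition prb (T : countType) (Y : Omega -> T) (t : T) : \bar R :=
  P (Y @^-1` [set t]).
Definition pr (T : countType) (Y : Omega -> T) (t : T) : R := fine (prb Y t).
Definition mfib (T : countType) (Y : Omega -> T) :=
  forall t, measurable (Y @^-1` [set t]).
Definition Hv (T : countType) (Y : Omega -> T) : \bar R :=
  \esum_(t in [set: T]) (phi (pr Y t))%:E.

Lemma Lg_ge0 x : (x <= 1)%R -> (0 <= Lg x)%R.
Proof. by move=> x1; rewrite /Lg oppr_ge0 ln_le0. Qed.

Lemma phi_ge0 x : (0 <= x <= 1)%R -> (0 <= phi x)%R.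
Proof. by move=> /andP[x0 x1]; rewrite /phi mulr_ge0// Lg_ge0. Qed.

Lemma phi0 : phi 0 = 0%R.
Proof. by rewrite /phi mul0r. Qed.

Section Pre.
Variables (T : countType) (Y : Omega -> T).
Hypothesis mY : mfib Y.

Let B (D : set T) (n : nat) : set Omega :=
  if choice.pickle_inv n is Some t then (if t \in D then Y @^-1` [set t] else set0)
  else set0.

Let mB D n : measurable (B D n).
Proof. by rewrite /B; case: (choice.pickle_inv n) => // t; case: ifP. Qed.

Let BE D : Y @^-1` D = \bigcup_n B D n.
Proof.
apply/seteqP; split => [w Dw|w [n _]].
  exists (choice.pickle (Y w)) => //; rewrite /B choice.pickleK_inv ifT //; exact: mem_set.
rewrite /B; case: (choice.pickle_inv n) => [t|] //; case: ifP => // /set_mem Dt /= Yt.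
by rewrite /preimage /= Yt.
Qed.

Lemma mpre D : measurable (Y @^-1` D).
Proof. by rewrite BE; apply: bigcupT_measurable => n; exact: mB. Qed.

Lemma prb_set D : P (Y @^-1` D) = \esum_(t in D) prb Y t.
Proof.
have tB : trivIset setT (B D).
  move=> i j _ _ [w []]; rewrite /B.
  case Ei: (choice.pickle_inv i) => [ti|] //; case Ej: (choice.pickle_inv j) => [tj|] //.
  case: ifP => // _ /= Yi; case: ifP => // _ /= Yj.
  have := (@choice.pickle_invK T i); have := (@choice.pickle_invK T j); rewrite Ei Ej /= => <- <-.
  by rewrite -Yi -Yj.
rewrite BE (measure_bigcup P [set: nat] (B D) (fun n _ => mB D n) tB).
rewrite nneseries_esum; last by move=> *; exact: measure_ge0.
transitivity (\esum_(j in choice.pickle @` D) P (B D j)); last first.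
  rewrite esum_image; last by move=> x y _ _; exact: (pcan_inj (@choice.pickleK T)).
  apply: eq_esum => t Dt; rewrite /B choice.pickleK_inv ifT //; exact: mem_set.
rewrite esum_mkcond [RHS]esum_mkcond; apply: eq_esum => i _.
rewrite ifT; last by rewrite inE /= inE.
case: ifPn => [//| Ni].
rewrite /B; case Ei: (choice.pickle_inv i) => [t|]; last exact: measure0.
case: ifP => [/set_mem Dt|]; last by rewrite measure0.
exfalso; apply: (negP Ni); apply: mem_set; exists t => //.
by have := (@choice.pickle_invK T i); rewrite Ei.
Qed.

End Pre.

Section Gen.
Variables (T : countType) (Y : Omega -> T).
Hypothesis mY : mfib Y.

Lemma prb_total : \esum_(t in [set: T]) prb Y t = 1.
Proof. by rewrite -prb_set// preimage_setT probability_setT. Qed.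

Lemma prbE t : prb Y t = (pr Y t)%:E.
Proof. by rewrite /pr fineK// fin_num_measure//; exact: mY. Qed.

Lemma pr_ge0 t : (0 <= pr Y t)%R.
Proof. by rewrite -lee_fin -prbE measure_ge0. Qed.

Lemma pr_le1 t : (pr Y t <= 1)%R.
Proof. by rewrite -lee_fin -prbE probability_le1. Qed.

Lemma pr01 t : (0 <= pr Y t <= 1)%R.
Proof. by rewrite pr_ge0 pr_le1. Qed.

Lemma mfib_comp (T' : countType) (f : T -> T') : mfib (f \o Y).
Proof. by move=> s; exact: (mpre mY (f @^-1` [set s])). Qed.

Lemma prb_fiber (T' : countType) (f : T -> T') s :
  prb (f \o Y) s = \esum_(t in f @^-1` [set s]) prb Y t.
Proof. exact: (prb_set mY). Qed.

End Gen.

Section Gen2.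
Variables (T : countType) (Y : Omega -> T).
Hypothesis mY : mfib Y.


Lemma Hv_fiberE (T' : countType) (f : T -> T') :
  Hv (f \o Y) = \esum_(t in [set: T]) (Lg (pr (f \o Y) (f t)))%:E * prb Y t.
Proof.
rewrite /Hv -(esum_fiber f); last first.
  move=> t; apply: mule_ge0; last exact: measure_ge0.
  by rewrite lee_fin Lg_ge0// pr_le1//; exact: mfib_comp.
apply: eq_esum => s _.
rewrite (eq_esum (b := fun t => (Lg (pr (f \o Y) s))%:E * prb Y t)); last first.
  by move=> t /= ->.
rewrite esumZ; last 2 first.
- by rewrite Lg_ge0// pr_le1//; exact: mfib_comp.
- by move=> t _; exact: measure_ge0.
rewrite -prb_fiber// (prbE) ?mfib_comp//.
  by rewrite -EFinM /phi mulrC.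
exact: mfib_comp.
Qed.

End Gen2.

Lemma Hv_ge0 (T : countType) (Y : Omega -> T) : mfib Y -> 0 <= Hv Y.
Proof. by move=> mY; apply: esum_ge0 => t _; rewrite lee_fin phi_ge0// pr01. Qed.

Lemma Hv_comp (T T' : countType) (Y : Omega -> T) (f : T -> T') :
  mfib Y -> Hv (f \o Y) <= Hv Y.
Proof.
move=> mY; rewrite Hv_fiberE//; apply: le_esum => t _.
rewrite prbE// -EFinM lee_fin /phi [X in (_ <= X)%R]mulrC.
have [p0|pp] := eqVneq (pr Y t) 0%R; first by rewrite p0 !mulr0.
have ppos : (0 < pr Y t)%R by rewrite lt_neqAle eq_sym pp pr_ge0.
have pq : (pr Y t <= pr (f \o Y) (f t))%R.
  rewrite -lee_fin -!prbE//; last exact: mfib_comp.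
  apply: le_measure; rewrite ?inE; [exact: mY|exact: (mfib_comp mY)|].
  by move=> w /= ->.
rewrite ler_pM2r// /Lg lerN2 ler_ln ?posrE//.
exact: lt_le_trans ppos _.
Qed.
End Entropy.
Section Submod.
Set Implicit Arguments. Unset Strict Implicit.
Context {d : measure_display} {Omega : measurableType d} {R : realType}
  (P : probability Omega R).
Local Open Scope ereal_scope.

Lemma key_ineq (p a b c : R) : (0 < p)%R -> (p <= a)%R -> (p <= b)%R -> (p <= c)%R ->
  (phi p + Lg c * p + p <= Lg a * p + Lg b * p + a * b / c)%R.
Proof.
move=> p0 pa pb pc.
have a0 : (0 < a)%R by exact: lt_le_trans pa.
have b0 : (0 < b)%R by exact: lt_le_trans pb.
have c0 : (0 < c)%R by exact: lt_le_trans pc.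
set x := (a * b / (c * p))%R.
have x0 : (0 < x)%R by rewrite /x divr_gt0// mulr_gt0.
have H : (ln x <= x - 1)%R.
  have := @le_ln1Dx R (x - 1)%R.
  by rewrite (_ : (1 + (x - 1) = x)%R); [apply; lra|ring].
have Hx : ln x = (ln a + ln b - (ln c + ln p))%R.
  by rewrite /x ln_div ?posrE ?mulr_gt0// !lnM ?posrE.
rewrite Hx in H.
have px : (p * x = a * b / c)%R.
  rewrite /x; field; apply/andP; split; rewrite gt_eqF//.
have H2 : (p * (ln a + ln b - (ln c + ln p)) <= a * b / c - p)%R.
  rewrite -px -[X in (_ <= _ - X)%R]mulr1 -mulrBr.
  by rewrite ler_pM2l.
rewrite /phi /Lg; lra.
Qed.

Lemma Hv_submod (T1 T2 T3 : countType) (Y : Omega -> T1) (Z : Omega -> T2)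
    (f : T1 -> T3) (g : T2 -> T3) :
  mfib Y -> mfib Z -> (forall w, f (Y w) = g (Z w)) ->
  Hv P (fun w => (Y w, Z w)) + Hv P (f \o Y) <= Hv P Y + Hv P Z.
Proof.
move=> mY mZ hfg.
set YZ := fun w => (Y w, Z w).
have mYZ : mfib YZ.
  move=> [y z].
  rewrite (_ : _ @^-1` _ = (Y @^-1` [set y] `&` Z @^-1` [set z])%classic); first exact: measurableI.
  by apply/seteqP; split => w /=; case=> <- <-.
have mW : mfib (f \o Y) by exact: mfib_comp.
have gZ : g \o Z = f \o Y by apply/funext => w /=; rewrite hfg.
pose a := pr P Y; pose b := pr P Z; pose c := pr P (f \o Y); pose p := pr P YZ.
pose Q (k : T1 * T2) : R := if f k.1 == g k.2 then (a k.1 * b k.2 / c (f k.1))%R else 0%R.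
have a01 y : (0 <= a y <= 1)%R by exact: pr01.
have b01 z : (0 <= b z <= 1)%R by exact: pr01.
have c01 w : (0 <= c w <= 1)%R by exact: pr01.
have p01 k : (0 <= p k <= 1)%R by exact: pr01.
have Q0 k : (0 <= Q k)%R.
  rewrite /Q; case: ifP => // _.
  move: (a01 k.1) (b01 k.2) (c01 (f k.1)) => /andP[? _] /andP[? _] /andP[? _].
  by rewrite divr_ge0// mulr_ge0.
have pa k : (p k <= a k.1)%R.
  rewrite -lee_fin /p /a -!prbE//; apply: le_measure; rewrite ?inE//.
  by move=> w /= <-.
have pb k : (p k <= b k.2)%R.
  rewrite -lee_fin /p /b -!prbE//; apply: le_measure; rewrite ?inE//.
  by move=> w /= <-.
have pc k : (p k <= c (f k.1))%R.
  rewrite -lee_fin /p /c -!prbE//; apply: le_measure; rewrite ?inE//.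
  by move=> w /= <-.
have pfg k : (0 < p k)%R -> f k.1 = g k.2.
  move=> pk; have : YZ @^-1` [set k] !=set0.
    apply/set0P; apply: contraTneq pk => E.
    by rewrite /p /pr /prb E measure0 /= ltxx.
  by case=> w /= <-; rewrite hfg.
have HY : Hv P Y = \esum_(k in [set: T1 * T2]) (Lg (a k.1))%:E * (p k)%:E.
  rewrite [Hv P Y](_ : _ = Hv P (fst \o YZ))// Hv_fiberE//.
  by apply: eq_esum => k _; rewrite prbE.
have HZ : Hv P Z = \esum_(k in [set: T1 * T2]) (Lg (b k.2))%:E * (p k)%:E.
  rewrite [Hv P Z](_ : _ = Hv P (snd \o YZ))// Hv_fiberE//.
  by apply: eq_esum => k _; rewrite prbE.
have HW : Hv P (f \o Y) = \esum_(k in [set: T1 * T2]) (Lg (c (f k.1)))%:E * (p k)%:E.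
  rewrite [Hv P (f \o Y)](_ : _ = Hv P ((f \o fst) \o YZ))// Hv_fiberE//.
  by apply: eq_esum => k _; rewrite prbE.
have H1 : \esum_(k in [set: T1 * T2]) (p k)%:E = 1.
  rewrite -(prb_total P mYZ); apply: eq_esum => k _; by rewrite prbE.
have HQ : \esum_(k in [set: T1 * T2]) (Q k)%:E <= 1.
  have -> : [set: T1 * T2] = [set: T1] `*`` (fun _ => [set: T2]).
    by apply/seteqP; split.
  rewrite -(@esum_esum _ _ _ [set: T1] (fun _ => [set: T2]) (fun y z => (Q (y, z))%:E)); last by move=> *; rewrite lee_fin.
  rewrite -(prb_total P mY); apply: le_esum => y _.
  rewrite (_ : \esum_(z in [set: T2]) (Q (y, z))%:E =
     \esum_(z in g @^-1` [set f y]) ((a y / c (f y))%R)%:E * prb P Z z); last first.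
    rewrite [RHS]esum_mkcond; apply: eq_esum => z _ /=.
    case: (boolP (z \in g @^-1` [set f y])) => [zin|Nz].
      have gz : g z = f y by move/set_mem: zin.
      by rewrite /Q /= gz eqxx prbE// -EFinM mulrAC.
    rewrite /Q /= ifN//; apply: contra Nz => /eqP ->; exact: mem_set.
  rewrite esumZ; last 2 first.
  - by move: (a01 y) (c01 (f y)) => /andP[? _] /andP[? _]; rewrite divr_ge0.
  - by move=> *; exact: measure_ge0.
  rewrite -(prb_fiber P mZ) gZ prbE// [prb P Y y]prbE// -EFinM lee_fin -/c -/(a y).
  have [->|cn0] := eqVneq (c (f y)) 0%R; first by rewrite invr0 !mulr0; case/andP: (a01 y).
  by rewrite divfK.
have main : Hv P YZ + Hv P (f \o Y) + 1 <= Hv P Y + Hv P Z + 1.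
  apply: (@le_trans _ _ (Hv P Y + Hv P Z + \esum_(k in [set: T1 * T2]) (Q k)%:E)); last first.
    exact: leeD2l.
  have hA k : 0 <= (Lg (a k.1))%:E * (p k)%:E.
    by rewrite -EFinM lee_fin mulr_ge0// ?Lg_ge0//; [case/andP: (a01 k.1)|case/andP: (p01 k)].
  have hB k : 0 <= (Lg (b k.2))%:E * (p k)%:E.
    by rewrite -EFinM lee_fin mulr_ge0// ?Lg_ge0//; [case/andP: (b01 k.2)|case/andP: (p01 k)].
  have hC k : 0 <= (Lg (c (f k.1)))%:E * (p k)%:E.
    by rewrite -EFinM lee_fin mulr_ge0// ?Lg_ge0//; [case/andP: (c01 (f k.1))|case/andP: (p01 k)].
  have hP k : 0 <= (p k)%:E by rewrite lee_fin; case/andP: (p01 k).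
  have hF k : 0 <= (phi (p k))%:E by rewrite lee_fin phi_ge0.
  have hQ k : 0 <= (Q k)%:E by rewrite lee_fin.
  rewrite HY HZ HW -H1 [Hv P YZ]/Hv -!esumD.
  all: try by move=> k _; do ?apply: adde_ge0; first [exact: hA k|exact: hB k|exact: hC k|exact: hP k|exact: hF k|exact: hQ k].
  rewrite /Hv; apply: le_esum => k _.
  rewrite -!EFinM -!EFinD lee_fin -/(p k).
  have [pk0|pkn0] := eqVneq (p k) 0%R.
    rewrite pk0 phi0 !mulr0 !addr0 add0r; exact: Q0.
  have pk : (0 < p k)%R by rewrite lt_neqAle eq_sym pkn0; case/andP: (p01 k).
  rewrite /Q ifT; last by rewrite pfg.
  exact: key_ineq.
by rewrite leeD2rE in main.
Qed.

End Submod.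
Section HentProps.
Set Implicit Arguments. Unset Strict Implicit.
Context {V A : countType} {d : measure_display} {Omega : measurableType d}
  {R : realType} (P : probability Omega R) (X : V -> Omega -> A).
Hypothesis mX : random_field X.
Variable a0 : A.
Local Open Scope ereal_scope.

Definition XS (S : {fset V}) (w : Omega) : {ffun S -> A} := [ffun i => X (val i) w].

Definition ext (S : {fset V}) (x : {ffun S -> A}) (v : V) : A :=
  odflt a0 (omap x (insub v : option S)).

Definition res (S S' : {fset V}) (x : {ffun S -> A}) : {ffun S' -> A} :=
  [ffun i : S' => ext x (val i)].

Lemma ext_in (S : {fset V}) (x : {ffun S -> A}) (i : S) : ext x (val i) = x i.
Proof. by rewrite /ext valK. Qed.

Lemma ext_XS (S : {fset V}) w v : v \in S -> ext (XS S w) v = X v w.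
Proof. by move=> vS; rewrite /ext insubT /= ffunE. Qed.

Lemma res_XS (S S' : {fset V}) w : S' `<=` S -> res S' (XS S w) = XS S' w.
Proof.
move=> sub; apply/ffunP => i; rewrite /res ffunE ext_XS; first by rewrite /XS ffunE.
exact: (fsubsetP sub _ (fsvalP i)).
Qed.

Lemma mfib_XS S : mfib (XS S).
Proof.
move=> x.
rewrite (_ : _ @^-1` _ = \bigcap_(i in [set: S]) (X (val i) @^-1` [set x i]))%classic.
  by apply: fin_bigcap_measurable => // i _; exact: mX.
apply/seteqP; split => w /=.
  by move=> <- i _; rewrite /= ffunE.
by move=> H; apply/ffunP => i; rewrite ffunE; exact: H.
Qed.

Lemma Hent_XS S : Hent P X S = Hv P (XS S).
Proof.
rewrite /Hent /Hv; apply: eq_esum => x _; congr (_%:E).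
rewrite /phi /Lg /pr /prb mulrN; congr (- (_ * ln _))%R.
all: congr (fine (P _)); apply/seteqP; split => w /=.
all: try by move=> H; apply/ffunP => i; rewrite ffunE; exact: H.
all: by move=> <- i; rewrite ffunE.
Qed.

Lemma Hent_ge0 S : 0 <= Hent P X S.
Proof. by rewrite Hent_XS; apply: Hv_ge0; exact: mfib_XS. Qed.

Lemma Hent_mono (S S' : {fset V}) : S `<=` S' -> Hent P X S <= Hent P X S'.
Proof.
move=> sub; rewrite !Hent_XS.
rewrite (_ : XS S = res S \o XS S'); first by apply: Hv_comp; exact: mfib_XS.
by apply/funext => w /=; rewrite res_XS.
Qed.

Definition merge (S S' : {fset V}) (xy : {ffun S -> A} * {ffun S' -> A}) :
  {ffun (S `|` S') -> A} :=
  [ffun i => if val i \in S then ext xy.1 (val i) else ext xy.2 (val i)].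

Lemma Hent_submod (S S' : {fset V}) :
  Hent P X (S `|` S') + Hent P X (S `&` S') <= Hent P X S + Hent P X S'.
Proof.
rewrite !Hent_XS.
have H := @Hv_submod _ _ _ P _ _ _ (XS S) (XS S') (res (S `&` S')) (res (S `&` S'))
  (mfib_XS (S:=S)) (mfib_XS (S:=S')) ltac:(by move=> w; rewrite !res_XS// ?fsubsetIl ?fsubsetIr).
apply: le_trans H; apply: leeD.
  rewrite (_ : XS (S `|` S') = @merge S S' \o (fun w => (XS S w, XS S' w))).
    apply: Hv_comp => -[x y].
    rewrite (_ : _ @^-1` _ = (XS S @^-1` [set x] `&` XS S' @^-1` [set y])%classic).
      by apply: measurableI; exact: mfib_XS.
    by apply/seteqP; split => w /=; case=> <- <-.
  apply/funext => w /=; apply/ffunP => i; rewrite !ffunE /=.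
  case: ifP => iS; first by rewrite ext_XS.
  rewrite ext_XS//; have := fsvalP i; rewrite in_fsetU iS /=; done.
rewrite (_ : XS (S `&` S') = res (S `&` S') \o XS S)//.
by apply/funext => w /=; rewrite res_XS// fsubsetIl.
Qed.

Lemma Hent0 : Hent P X fset0 = 0.
Proof.
rewrite Hent_XS /Hv esum1// => x _.
rewrite /pr /prb (_ : _ @^-1` _ = setT)%classic ?probability_setT /= /phi /Lg ?ln1 ?oppr0 ?mulr0//.
apply/seteqP; split => w //= _; apply/ffunP => i.
by exfalso; have := fsvalP i; rewrite in_fset0.
Qed.

Lemma Hent_fin : (forall v, Hent P X [fset v] < +oo) -> forall S, Hent P X S < +oo.
Proof.
move=> H1; elim/fset1U_rect => [|x S _ IH]; first by rewrite Hent0 ltry.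
have := Hent_submod [fset x] S.
move=> /(le_trans _)-/(_ (Hent P X ([fset x] `|` S))) H.
apply: le_lt_trans (H _) _; first by rewrite leeDl// Hent_ge0.
by rewrite lte_add_pinfty// H1.
Qed.

Lemma Hent_inv (G : set (V -> V)) (g ginv : V -> V) (S : {fset V}) :
  invariant_law G P X -> G g -> cancel g ginv -> cancel ginv g ->
  Hent P X [fset g v | v in S] <= Hent P X S.
Proof.
move=> inv Gg gK ginvK.
rewrite !Hent_XS /Hv.
set gS := [fset g v | v in S].
pose ga (x' : {ffun gS -> A}) : {ffun S -> A} := [ffun s => ext x' (g (val s))].
have Hp x' : pr P (XS gS) x' = pr P (XS S) (ga x').
  rewrite /pr /prb; congr fine.
  transitivity (P [set w | forall v, v \in gS -> X v w = ext x' v]).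
    congr (P _); apply/seteqP; split => w /=.
      by move=> <- v vgS; rewrite ext_XS.
    move=> H; apply/ffunP => i; rewrite ffunE -ext_in; exact: (H _ (fsvalP i)).
  rewrite -(inv g ginv Gg gK ginvK gS (ext x')).
  congr (P _); apply/seteqP; split => w /=.
    move=> H; apply/ffunP => s; rewrite !ffunE.
    have := H (g (val s)) (in_imfset _ _ (fsvalP s)); by rewrite gK.
  move=> E v /imfsetP [s /= sS ->]; rewrite gK.
  by move/ffunP: E => /(_ [` sS]); rewrite !ffunE.
rewrite (eq_esum (b := fun x' => (phi (pr P (XS S) (ga x')))%:E)); last first.
  by move=> x' _; rewrite Hp.
rewrite -(esum_image _ ga (fun x => (phi (pr P (XS S) x))%:E)).
  apply: esum_subset => // x _; rewrite lee_fin phi_ge0//; apply: pr01; exact: mfib_XS.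
move=> x1 x2 _ _ E; apply/ffunP => i; rewrite -!ext_in.
have /imfsetP [s /= sS ->] := fsvalP i.
by move/ffunP: E => /(_ [` sS]); rewrite !ffunE.
Qed.

End HentProps.
Section Shearer.
Set Implicit Arguments. Unset Strict Implicit.
Context {R : realType} {V : choiceType} (f : {fset V} -> R).
Hypothesis f0 : f fset0 = 0%R.
Hypothesis fsub : forall S T, (f (S `|` T) + f (S `&` T) <= f S + f T)%R.
Hypothesis fmono : forall S T, S `<=` T -> (f S <= f T)%R.

Lemma shearer_step (Fs : seq {fset V}) (x : V) (S : {fset V}) : x \notin S ->
  (\sum_(F <- Fs) f (F `&` S) + (count (fun F => x \in F) Fs)%:R * (f (x |` S) - f S)
    <= \sum_(F <- Fs) f (F `&` (x |` S)))%R.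
Proof.
move=> xS; elim: Fs => [|F Fs IH]; first by rewrite !big_nil mul0r addr0.
rewrite !big_cons /= natrD mulrDl.
have [xF|xF] := boolP (x \in F).
  have E1 : F `&` (x |` S) = x |` (F `&` S).
    by apply/fsetP => y; rewrite !inE; case: eqVneq => [->|_]; rewrite ?xF ?(negPf xS) /= ?andbF ?orbF //; case: (y \in F); case: (y \in S).
  have E2 : (x |` (F `&` S)) `|` S = x |` S.
    by apply/fsetP => y; rewrite !inE; case: eqVneq => [->|_]; rewrite ?xF ?(negPf xS) /= ?andbF ?orbF //; case: (y \in F); case: (y \in S).
  have E3 : (x |` (F `&` S)) `&` S = F `&` S.
    by apply/fsetP => y; rewrite !inE; case: eqVneq => [->|_]; rewrite ?xF ?(negPf xS) /= ?andbF ?orbF //; case: (y \in F); case: (y \in S).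
  have := fsub (x |` (F `&` S)) S; rewrite E2 E3 -E1 mul1r => H.
  lra.
have E1 : F `&` (x |` S) = F `&` S.
  by apply/fsetP => y; rewrite !inE; case: eqVneq => [->|_]; rewrite ?(negPf xF) /= ?andbF //.
rewrite E1 mul0r add0r; lra.
Qed.

Lemma shearer (Fs : seq {fset V}) (k : nat) (S : {fset V}) :
  (forall x, x \in S -> k <= count (fun F => x \in F) Fs)%N ->
  (k%:R * f S <= \sum_(F <- Fs) f F)%R.
Proof.
move=> cov.
apply: (@le_trans _ _ (\sum_(F <- Fs) f (F `&` S))); last first.
  by apply: ler_sum => F _; apply: fmono; exact: fsubsetIl.
elim/fset1U_rect: S cov => [|x S xS IH] cov.
  rewrite f0 mulr0 big1// => F _; by rewrite fsetI0.
have IH' := IH (fun y yS => cov y (fsubsetP (fsubsetU1 x S) y yS)).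
apply: le_trans (shearer_step Fs xS).
have ck : (k%:R <= (count (fun F => x \in F) Fs)%:R :> R)%R by rewrite ler_nat cov// fset1U1.
have fm : (f S <= f (x |` S))%R by apply: fmono; exact: fsubsetU1.
have : (k%:R * (f (x |` S) - f S) <= (count (fun F => x \in F) Fs)%:R * (f (x |` S) - f S) :> R)%R.
  by apply: ler_wpM2r => //; rewrite subr_ge0.
lra.
Qed.

End Shearer.
Lemma card_inj_le (T1 T2 : choiceType) (S1 : set T1) (S2 : set T2) (phi : T1 -> T2) :
  finite_set S1 -> finite_set S2 -> {in S1 &, injective phi} ->
  (forall x, S1 x -> S2 (phi x)) ->
  (#|` fset_set S1| <= #|` fset_set S2|)%N.
Proof.
move=> f1 f2 inj maps.
have := @uniq_leq_size _ (map phi (fset_set S1)) (fset_set S2).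
rewrite size_map; apply.
  rewrite map_inj_in_uniq ?fset_uniq// => x y.
  by rewrite !in_fset_set// !inE => xS yS; apply: inj; rewrite inE.
move=> _ /mapP[x + ->]; rewrite !in_fset_set// !inE => /maps; done.
Qed.

Section Combi.
Set Implicit Arguments. Unset Strict Implicit.
Context {V : countType} (G : set (V -> V)).
Hypothesis hG : perm_group G.
Hypothesis hsn : semi_nice G.

Definition gimg (g : V -> V) (S : {fset V}) : {fset V} := [fset g v | v in S].

Lemma G_inv g : G g -> exists2 h, G h & cancel g h /\ cancel h g.
Proof. by case: hG => _ _ _; apply. Qed.
Lemma G_comp g h : G g -> G h -> G (g \o h).
Proof. by case: hG => _ _ + _; apply. Qed.
Lemma G_id : G id.
Proof. by case: hG. Qed.
Lemma G_inj g : G g -> injective g.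
Proof. by move=> /G_inv [h _ [gh _]]; exact: can_inj gh. Qed.

Lemma gimg_comp g h S : gimg (g \o h) S = gimg g (gimg h S).
Proof.
apply/fsetP => y; apply/imfsetP/imfsetP => /= [[x xS ->]|[z /imfsetP [x /= xS ->] ->]].
  by exists (h x) => //; apply/imfsetP; exists x.
by exists x.
Qed.

Lemma gimg_inj g : injective g -> injective (gimg g).
Proof.
move=> ginj F1 F2 E; apply/fsetP => y.
have H F : (g y \in gimg g F) = (y \in F) by rewrite /gimg mem_imfset.
by rewrite -H E H.
Qed.

Lemma card_gimg g S : injective g -> #|` gimg g S| = #|` S|.
Proof. by move=> ginj; rewrite /gimg card_imfset. Qed.

Definition Orb (v w u : V) : set V := [set g w | g in [set g | G g /\ g v = u]].

Lemma orb_fin v w u : finite_set (Orb v w u).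
Proof.
case: hsn => tr fin.
have [g0 Gg0 g0v] := tr v u.
have [h0 Gh0 [g0h0 h0g0]] := G_inv Gg0.
apply: (sub_finite_set _ (finite_image g0 (fin v w))).
move=> _ [g [Gg gv] <-].
exists (h0 (g w)); last by rewrite h0g0.
exists (h0 \o g) => //.
split; first exact: G_comp.
by rewrite /= gv -g0v g0h0.
Qed.

Lemma bdryC_fin (Vn : {fset V}) (v w : V) : finite_set (bdry G v w (~` [set` Vn])).
Proof.
apply: (sub_finite_set (B := (\bigcup_(x in [set` Vn]) Orb w v x)%classic)).
  move=> _ [g [Gg [gv gw]] <-].
  have gwV : g w \in Vn by apply: contrapT => H; apply: gw; exact: H.
  by exists (g w) => //; exists g.
apply: bigcup_finite; first exact: finite_fset.
by move=> x _; exact: orb_fin.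
Qed.

Variables (v0 : V) (W : {fset V}).

Definition Rel (p : V * {fset V}) : Prop :=
  exists2 g, G g & g v0 = p.1 /\ p.2 = gimg g W.
Definition Tset (u : V) : set {fset V} := [set F | Rel (u, F)].
Definition Cset (x : V) : set (V * {fset V}) := [set p | Rel p /\ x \in p.2].

Lemma Tfin u : finite_set (Tset u).
Proof.
pose Q := \bigcup_(w <- W) fset_set (Orb v0 w u).
apply: (sub_finite_set _ (finite_fset (fpowerset Q))).
move=> F [g Gg /= [gv ->]]; rewrite /= fpowersetE; apply/fsubsetP => y /imfsetP [w /= wW ->].
apply/bigfcupP; exists w; first by rewrite wW.
rewrite in_fset_set; last exact: orb_fin.
by rewrite inE; exists g.
Qed.

Lemma Famfin (U : {fset V}) : finite_set [set p : V * {fset V} | Rel p /\ p.1 \in U].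
Proof.
apply: (sub_finite_set (B := (\bigcup_(u in [set` U]) ((fun F => (u, F)) @` Tset u))%classic)).
  move=> [u F] /= [RuF uU]; exists u => //; exists F => //.
apply: bigcup_finite; first exact: finite_fset.
by move=> u _; apply: finite_image; exact: Tfin.
Qed.

Lemma Cfin x : finite_set (Cset x).
Proof.
pose Qx := \bigcup_(w <- W) fset_set (Orb w v0 x).
apply: (sub_finite_set _ (Famfin Qx)).
move=> [u F] /= [[g Gg /= [gv EF]] xF]; split; first by exists g.
move: xF; rewrite EF => /imfsetP [w /= wW xw].
apply/bigfcupP; exists w; first by rewrite wW.
rewrite in_fset_set; last exact: orb_fin.
by rewrite inE; exists g.
Qed.

Definition cc (x : V) : nat := #|` fset_set (Cset x)|.
Definition NN (u : V) : nat := #|` fset_set (Tset u)|.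

Lemma cc_le x y : (cc x <= cc y)%N.
Proof.
case: hsn => tr _; have [k Gk kx] := tr x y.
have kinj := G_inj Gk.
apply: (@card_inj_le _ _ _ _ (fun p => (k p.1, gimg k p.2))); try exact: Cfin.
  move=> [u1 F1] [u2 F2] _ _ /= [/kinj -> /(gimg_inj kinj) ->]; done.
move=> [u F] [[g Gg /= [gv EF]] xF]; split.
  exists (k \o g); first exact: G_comp.
  by rewrite /= gv EF gimg_comp.
by rewrite /= -kx /gimg mem_imfset.
Qed.

Lemma cc_const x y : cc x = cc y.
Proof. by apply/eqP; rewrite eqn_leq !cc_le. Qed.

Lemma NN_le u u' : (NN u <= NN u')%N.
Proof.
case: hsn => tr _; have [k Gk ku] := tr u u'.
have kinj := G_inj Gk.
apply: (@card_inj_le _ _ _ _ (gimg k)); try exact: Tfin.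
  by move=> F1 F2 _ _ /(gimg_inj kinj).
move=> F [g Gg /= [gv EF]].
exists (k \o g); first exact: G_comp.
by rewrite /= gv ku EF gimg_comp.
Qed.

Lemma NN_const u u' : NN u = NN u'.
Proof. by apply/eqP; rewrite eqn_leq !NN_le. Qed.

Lemma NN_gt0 : (0 < NN v0)%N.
Proof.
rewrite /NN cardfs_gt0; apply/eqP => E.
have : W \in fset_set (Tset v0).
  rewrite in_fset_set; last exact: Tfin.
  rewrite inE; exists id; first exact: G_id.
  split => //=; apply/fsetP => y; rewrite /gimg; apply/idP/imfsetP => [yW|[z zW ->]//].
  by exists y.
by rewrite E in_fset0.
Qed.

End Combi.
Lemma arith_bound {R : realType} (n c N w b b' fV fW : R) :
  (0 < n)%R -> (0 < c)%R -> (0 < N)%R -> (0 < w)%R -> (0 <= fW)%R -> (b < n)%R ->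
  (0 <= b')%R ->
  (c * fV <= (n + b') * N * fW)%R -> ((n - b) * N * w <= n * c)%R ->
  (fV / n <= fW / w * ((n + b') / (n - b)))%R.
Proof.
move=> n0 c0 N0 w0 fW0 bn b'0 H1 H2.
have nb0 : (0 < n - b)%R by rewrite subr_gt0.
set K := ((n + b') * N * fW)%R.
have K0 : (0 <= K)%R.
  apply: mulr_ge0 => //; apply: mulr_ge0; [apply: addr_ge0 => //|]; exact: ltW.
have E : (fW / w * ((n + b') / (n - b)) = K / ((n - b) * N * w))%R.
  by rewrite /K; field; rewrite !gt_eqF.
rewrite E.
have D0 : (0 < (n - b) * N * w)%R by rewrite !mulr_gt0.
have h1 : (fV <= K / c)%R by rewrite ler_pdivlMr // mulrC.
have h2 : (fV / n <= K / c / n)%R by rewrite ler_pM2r ?invr_gt0.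
apply: (le_trans h2); rewrite -mulrA -invfM; apply: ler_wpM2l => //.
by rewrite lef_pV2 ?posrE ?mulr_gt0 // (mulrC c).
Qed.

Lemma count_fsub (T : choiceType) (F S : {fset T}) :
  F `<=` S -> count (fun x => x \in F) S = #|` F|.
Proof.
move=> FS; rewrite -size_filter; apply: perm_size; apply: uniq_perm.
- by apply: filter_uniq; exact: fset_uniq.
- exact: fset_uniq.
move=> x; rewrite mem_filter; apply/andP/idP => [[]//|xF]; split => //.
exact: (fsubsetP FS).
Qed.

Lemma card_bigfcup (T : choiceType) (I : eqType) (r : seq I) (F : I -> {fset T}) :
  (#|` \bigcup_(i <- r) F i| <= \sum_(i <- r) #|` F i|)%N.
Proof.
elim: r => [|i r IH]; first by rewrite !big_nil cardfs0.
rewrite !big_cons cardfsU; apply: leq_trans (leq_subr _ _) _.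
by rewrite leq_add2l.
Qed.

Lemma count_sumn (T : Type) (a : pred T) (s : seq T) :
  count a s = (\sum_(x <- s) (a x : nat))%N.
Proof. by elim: s => [|x s IH]; rewrite ?big_nil ?big_cons //= IH. Qed.

Lemma sum_cst {R : realType} (T : Type) (s : seq T) (k : R) :
  (\sum_(x <- s) k = (size s)%:R * k)%R.
Proof.
by elim: s => [|x s IH]; rewrite ?big_nil ?big_cons ?mul0r //= IH -add1n natrD mulrDl mul1r.
Qed.

Lemma sum_cstn (T : Type) (s : seq T) (k : nat) :
  (\sum_(x <- s) k = size s * k)%N.
Proof. by elim: s => [|x s IH]; rewrite ?big_nil ?big_cons //= IH mulSn. Qed.

Section Bound.
Set Implicit Arguments. Unset Strict Implicit.
Context {R : realType} {V : countType} (G : set (V -> V)).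
Hypothesis hG : perm_group G.
Hypothesis hsn : semi_nice G.
Variables (v0 : V) (W : {fset V}).
Variable f : {fset V} -> R.
Hypothesis f0 : f fset0 = 0%R.
Hypothesis fsub : forall S T, (f (S `|` T) + f (S `&` T) <= f S + f T)%R.
Hypothesis fmono : forall S T, S `<=` T -> (f S <= f T)%R.
Hypothesis finv : forall g, G g -> (f (gimg g W) <= f W)%R.

Definition bsum (Vn : {fset V}) : nat :=
  \sum_(w <- W) #|` fset_set (bdry G v0 w [set` Vn])|.
Definition bsum' (Vn : {fset V}) : nat :=
  \sum_(w <- W) #|` fset_set (bdry G v0 w (~` [set` Vn]))|.

Lemma bound (Vn : {fset V}) :
  (forall w, finite_set (bdry G v0 w (~` [set` Vn]))) ->
  W != fset0 -> (bsum Vn < #|` Vn|)%N ->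
  (f Vn / #|` Vn|%:R <= f W / #|` W|%:R * ((#|` Vn| + bsum' Vn)%:R / (#|` Vn| - bsum Vn)%:R))%R.
Proof.
move=> finB' W0 bn.
have finB w : finite_set (bdry G v0 w [set` Vn]).
  apply: (sub_finite_set _ (finite_fset Vn)).
  by move=> _ [g [Gg [gin _]] <-].
pose Bn := \bigcup_(w <- W) fset_set (bdry G v0 w [set` Vn]).
pose B'n := \bigcup_(w <- W) fset_set (bdry G v0 w (~` [set` Vn])).
pose Un := Vn `|` B'n.
pose Tf u := fset_set (Tset G v0 W u).
pose Fs := [seq (u, F) | u <- Un, F <- Tf u].
pose N := NN G v0 W v0.
pose c := cc G v0 W v0.
have NE u : NN G v0 W u = N by rewrite /N (NN_const hG hsn v0 W u v0).
have cE x : cc G v0 W x = c by rewrite /c (cc_const hG hsn v0 W x v0).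
have Tf_mem u F : (F \in Tf u) = `[< Tset G v0 W u F >].
  by rewrite /Tf in_fset_set ?inE ?asboolE//; exact: Tfin.
have Fs_uniq : uniq Fs.
  apply: allpairs_uniq_dep.
  - exact: fset_uniq.
  - by move=> u _; exact: fset_uniq.
  - by move=> [u1 F1] [u2 F2] _ _ /= [-> ->].
have Fs_mem p : (p \in Fs) = (p.1 \in Un) && (p.2 \in Tf p.1).
  apply/allpairsPdep/andP => [[u [F [uU FT ->]]]//|[uU FT]].
  by exists p.1, p.2; split => //; case: p {uU FT}.
have cov x : x \in Vn -> count (fun p => x \in p.2) Fs = c.
  move=> xV; rewrite -(cE x) /cc -size_filter.
  have Cfx := Cfin hG hsn v0 W x.
  apply/eqP; rewrite eqn_leq; apply/andP; split.
    apply: uniq_leq_size; first exact: filter_uniq.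
    move=> p; rewrite mem_filter Fs_mem Tf_mem => /andP[xp /andP[_ /asboolP RT]].
    rewrite in_fset_set// inE; case: p xp RT => u F xp RT; split; [exact: RT|exact: xp].
  apply: uniq_leq_size; first exact: fset_uniq.
  move=> [u F]; rewrite in_fset_set// inE => -[[g Gg /= [gu EF]] xF].
  rewrite mem_filter xF /= Fs_mem /= Tf_mem; apply/andP; split; last by apply/asboolP; exists g.
  rewrite /Un in_fsetU; apply/orP.
  have [uV|uNV] := boolP (u \in Vn); [by left|right].
  move: xF; rewrite EF => /imfsetP [w /= wW xw].
  apply/bigfcupP; exists w; first by rewrite wW.
  rewrite in_fset_set// inE; exists g => //.
  split; first exact: Gg.
  by rewrite gu -xw /=; split => //; first exact/negP.
have Sh : (c%:R * f Vn <= \sum_(F <- map snd Fs) f F)%R.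
  apply: shearer => // x xV; rewrite count_map.
  by rewrite -(cov x xV).
have Sup : (\sum_(F <- map snd Fs) f F <= (#|` Un| * N)%:R * f W)%R.
  rewrite big_map big_allpairs_dep /=.
  apply: (@le_trans _ _ (\sum_(u <- Un) (N%:R * f W))).
    apply: ler_sum => u _.
    apply: (@le_trans _ _ (\sum_(F <- Tf u) f W)).
      rewrite big_seq_cond [X in (_ <= X)%R]big_seq_cond; apply: ler_sum => F /andP[+ _].
      rewrite Tf_mem => /asboolP [g Gg /= [_ ->]]; exact: finv.
    by rewrite sum_cst -(NE u).
  by rewrite sum_cst mulrA natrM.
have Ucard : (#|` Un| <= #|` Vn| + bsum' Vn)%N.
  rewrite /Un cardfsU; apply: leq_trans (leq_subr _ _) _.
  by rewrite leq_add2l; exact: card_bigfcup.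
have Bcard : (#|` Bn| <= bsum Vn)%N by exact: card_bigfcup.
have low : ((#|` Vn| - bsum Vn) * N * #|` W| <= #|` Vn| * c)%N.
  have E1 : (#|` Vn| * c = \sum_(x <- Vn) count (fun p => x \in p.2) Fs)%N.
    rewrite -sum_cstn big_seq_cond [RHS]big_seq_cond; apply: eq_bigr => x /andP[xV _].
    by rewrite cov.
  rewrite E1.
  under eq_bigr do rewrite count_sumn.
  rewrite (@exchange_big _ 0%N addn _ _ Vn Fs xpredT xpredT) /= big_allpairs_dep /=.
  have Vmem : (Vn `\` Bn) `<=` Un.
    by apply/fsubsetP => x; rewrite in_fsetD in_fsetU => /andP[_ ->].
  apply: (@leq_trans (\sum_(u <- Un) ((u \in Vn `\` Bn) * (N * #|` W|)))%N).
    rewrite -big_distrl /= -count_sumn count_fsub// mulnA leq_mul2r leq_mul2r.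
    rewrite cardfsD leq_sub2l ?orbT//.
    by apply: leq_trans Bcard; apply: fsubset_leq_card; exact: fsubsetIr.
  apply: leq_sum => u _.
  have [uD|] := boolP (u \in Vn `\` Bn); last by rewrite mul0n.
  rewrite mul1n -(NE u) /NN -sum_cstn.
  rewrite [X in (_ <= X)%N]big_seq_cond [X in (X <= _)%N]big_seq_cond.
  apply: leq_sum => F /andP[FT _].
  move: FT; rewrite Tf_mem => /asboolP [g Gg /= [gu EF]].
  move: uD; rewrite in_fsetD => /andP[uB uV].
  have FV : F `<=` Vn.
    apply/fsubsetP => y; rewrite EF => /imfsetP [w /= wW ->].
    apply/negPn/negP => gwV; apply: (negP uB).
    apply/bigfcupP; exists w; first by rewrite wW.
    rewrite in_fset_set// inE; exists g => //; split => //.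
    by rewrite gu; split => //; exact/negP.
  rewrite -count_sumn count_fsub// EF card_gimg//.
  exact: (G_inj hG Gg).
have n0 : (0 < #|` Vn|)%N by apply: leq_ltn_trans bn.
have N0 : (0 < N)%N by exact: (NN_gt0 hG hsn).
have W0' : (0 < #|` W|)%N by rewrite cardfs_gt0.
have c0 : (0 < c)%N.
  rewrite -(ltn_pmul2l n0) muln0; apply: leq_trans low.
  by rewrite !muln_gt0 N0 W0' subn_gt0 bn.
rewrite (natrB _ (ltnW bn)) natrD.
apply: (@arith_bound R _ c%:R N%:R); rewrite ?ltr0n ?ler0n//.
- by rewrite -f0; apply: fmono; exact: fsub0set.
- by rewrite ltr_nat.
- apply: (le_trans Sh); apply: (le_trans Sup).
  have fW0 : (0 <= f W)%R by rewrite -f0; apply: fmono; exact: fsub0set.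
  apply: ler_wpM2r => //.
  rewrite -(natrD R) -(natrM R) ler_nat.
  by apply: leq_mul => //.
- by rewrite -(natrB R (ltnW bn)) -!(natrM R) ler_nat; exact: low.
Qed.

End Bound.
Lemma cvg_sum0 {R : realType} (T : eqType) (s : seq T) (u : T -> nat -> R) :
  (forall w, (u w) @ \oo --> (0 : R)) ->
  (fun n => \sum_(w <- s) u w n) @ \oo --> (0 : R).
Proof.
move=> H; elim: s => [|w s IH].
  under eq_fun do rewrite big_nil.
  exact: cvg_cst.
under eq_fun do rewrite big_cons.
have := cvgD (H w) IH; rewrite addr0; exact.
Qed.

Lemma final_arith {R : realType} (N b b' m dl : R) :
  (0 < N)%R -> (0 <= b)%R -> (0 <= b')%R -> (0 <= m)%R -> (0 < dl)%R ->
  (dl <= 1 / 2)%R -> (b < dl * N)%R -> (b' < dl * N)%R ->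
  (m * ((N + b') / (N - b)) <= m * (1 + 4 * dl))%R.
Proof.
move=> N0 b0 b'0 m0 d0 d2 bN b'N.
apply: ler_wpM2l => //.
have Nb : (0 < N - b)%R by nra.
rewrite ler_pdivrMr//.
nra.
Qed.

Theorem corollary5p8 (R : realType) (V A : countType) (G : set (V -> V))
  (d : measure_display) (Omega : measurableType d) (P : probability Omega R)
  (X : V -> Omega -> A) :
  perm_group G -> semi_nice G -> process G P X ->
  (forall v : V, (Hent P X [fset v] < +oo)%E) ->
  forall Vn : nat -> {fset V}, coFolner R G Vn ->
  (fun n => (Hent P X (Vn n) * ((#|` Vn n|%:R)^-1)%:E)%E) @ \oo --> hrate P X.
Proof.
move=> hG hsn [mX inv] Hfin Vn [Vn0 cof].
have [v0 _] : exists v, v \in Vn 0%N by apply/fset0Pn.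
have [w0 _] : exists w : Omega, True.
  apply: contrapT => NE.
  have : (setT : set Omega) = set0.
    by apply/seteqP; split => // w _; apply: NE; exists w.
  move=> E; have := probability_setT P; rewrite E measure0 => /(congr1 fine) /= /eqP.
  by rewrite eq_sym oner_eq0.
pose a0 := X v0 w0.
pose f S := fine (Hent P X S).
have Hfin' S : (Hent P X S < +oo)%E by exact: (@Hent_fin _ _ _ _ _ P X mX a0 Hfin S).
have HE S : Hent P X S = (f S)%:E.
  by rewrite /f fineK // ge0_fin_numE ?Hent_ge0 //; exact: mX.
have f0 : f fset0 = 0%R by rewrite /f Hent0.
have fsub S T : (f (S `|` T) + f (S `&` T) <= f S + f T)%R.
  by rewrite -lee_fin !EFinD -!HE; exact: (Hent_submod P mX a0).
have fmono S T : S `<=` T -> (f S <= f T)%R.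
  by move=> ST; rewrite -lee_fin -!HE; exact: (Hent_mono P mX a0).
have fge0 S : (0 <= f S)%R by rewrite -f0; apply: fmono; exact: fsub0set.
have finv W g : G g -> (f (gimg g W) <= f W)%R.
  move=> Gg; have [ginv _ [gK ginvK]] := G_inv hG Gg.
  rewrite -lee_fin -!HE; exact: (@Hent_inv _ _ _ _ _ P X mX a0 G g ginv W inv Gg gK ginvK).
have hlow W : W != fset0 -> (hrate P X <= (f W / #|` W|%:R)%:E)%E.
  move=> Wn; apply: ereal_inf_lbound; exists W => //.
  by rewrite HE -EFinM.
have h0 : (0 <= hrate P X)%E.
  apply/ereal_infP => _ [W Wn <-]; rewrite HE -EFinM lee_fin.
  by rewrite divr_ge0.
have hfin : hrate P X \is a fin_num.
  rewrite ge0_fin_numE//; apply: le_lt_trans (hlow [fset v0] _) _.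
    by apply/fset0Pn; exists v0; rewrite in_fset1.
  by rewrite ltry.
set h := fine (hrate P X).
have hE : hrate P X = h%:E by rewrite /h fineK.
rewrite hE; apply/fine_cvgP; split.
  by apply: nearW => n; rewrite HE -EFinM.
pose r n := (f (Vn n) / #|` Vn n|%:R)%R.
rewrite (_ : _ \o _ = r); last by apply/funext => n /=; rewrite HE -EFinM.
have hr n : (h <= r n)%R.
  by rewrite -lee_fin -hE hlow.
apply/cvgrPdist_lt => e e0.
have [_ [W Wn <-] HW] := lb_ereal_inf_adherent (e := (e / 2)%R) ltac:(by rewrite divr_gt0) hfin.
rewrite -/(hrate P X) hE HE -EFinM -EFinD lte_fin in HW.
set m := (f W / #|` W|%:R)%R in HW.
have m0 : (0 <= m)%R by rewrite divr_ge0.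
pose dl := (e / (8 * (m + 1) + 2 * e))%R.
have D0 : (0 < 8 * (m + 1) + 2 * e)%R by nra.
have dl0 : (0 < dl)%R by rewrite divr_gt0.
have dl2 : (dl <= 1 / 2)%R.
  by rewrite /dl ler_pdivrMr//; lra.
have dlm : (m * (1 + 4 * dl) < h + e)%R.
  have : (4 * m * dl <= e / 2)%R.
    rewrite /dl mulrA ler_pdivrMr//.
    have : (0 <= e * e)%R by nra.
    nra.
  nra.
have Hg : forall (S : nat -> {fset V} -> set V),
    (forall w, (fun n => (#|` fset_set (bdry G v0 w (S n (Vn n)))|%:R / #|` Vn n|%:R : R)%R) @ \oo --> (0 : R)) ->
    \forall n \near \oo, ((\sum_(w <- W) #|` fset_set (bdry G v0 w (S n (Vn n)))|)%:R < dl * #|` Vn n|%:R)%R.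
  move=> S HS.
  have := cvg_sum0 W HS; move/cvgrPdist_lt/(_ dl dl0).
  apply: filterS => n; rewrite sub0r normrN.
  have [Vz|Vnz] := eqVneq #|` Vn n| 0%N.
    by move/cardfs0_eq: Vz; move: (Vn0 n) => /eqP.
  have Vp : (0 < #|` Vn n|%:R :> R)%R by rewrite ltr0n lt0n.
  rewrite -mulr_suml -natr_sum ger0_norm ?divr_ge0// => H.
  by rewrite -ltr_pdivrMr.
have H1 := Hg (fun _ V => [set` V]) (fun w => (cof v0 w).2.2.1).
have H2 := Hg (fun _ V => ~` [set` V]) (fun w => (cof v0 w).2.2.2).
apply: filterS2 H1 H2 => n b1 b2.
rewrite -/(bsum G v0 W (Vn n)) in b1.
rewrite -/(bsum' G v0 W (Vn n)) in b2.
have Vp : (0 < #|` Vn n|%:R :> R)%R.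
  by rewrite ltr0n lt0n; apply/eqP => /cardfs0_eq; move: (Vn0 n) => /eqP.
have bn : (bsum G v0 W (Vn n) < #|` Vn n|)%N.
  rewrite -(ltr_nat R); apply: lt_le_trans b1 _.
  have : (dl <= 1)%R by lra.
  nra.
have Hb := @bound R V G hG hsn v0 W f f0 fsub fmono (finv W) (Vn n) (fun w => @bdryC_fin V G hG hsn (Vn n) v0 w) Wn bn.
rewrite ltr_distlC; apply/andP; split.
  by apply: lt_le_trans (hr n); rewrite ltrBlDr ltrDl.
apply: le_lt_trans Hb _; apply: le_lt_trans dlm.
rewrite (natrB _ (ltnW bn)) natrD.
apply: final_arith => //.
Qed.
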